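(* Let $A$ be a Lie conformal algebra and $M$ an $A$-module with a commutative associative product such that $\partial^M$ and all $a_\lambda$ are derivations of it. For $\xi\in\tilde\Gamma_h(A,M)$ and $\zeta\in\tilde\Gamma_j(A,M)$ the contraction operators on $\tilde\Gamma^\bullet(A,M)$ satisfy $\iota_\xi\iota_\zeta=(-1)^{hj}\iota_\zeta\iota_\xi$.
   Context: $\mathbb F$ field of characteristic 0. $\tilde\Gamma^k(A,M)$: $\mathbb F$-linear $\tilde\gamma:A^{\otimes k}\to\mathbb F[\lambda_1,\dots,\lambda_k]\otimes M$ with $\tilde\gamma(\dots,\partial a_i,\dots)=-\lambda_i\tilde\gamma(\dots)$ and skew-symmetric under simultaneous permutations of the $a_i$ and $\lambda_i$. $\tilde\Gamma_h(A,M)$: quotient of $A^{\otimes h}\otimes\mathrm{Hom}_{\mathbb F}(\mathbb F[\lambda_1,\dots,\lambda_h],M)$ by (C1) $\cdots\otimes\partial a_i\otimes\cdots\otimes\phi=-\cdots\otimes\lambda_i^*\phi$ where $(\lambda_i^*\phi)(f)=\phi(\lambda_if)$, and (C2) $a_{\sigma(1)}\otimes\cdots\otimes a_{\sigma(h)}\otimes\sigma^*\phi=\mathrm{sign}(\sigma)a_1\otimes\cdots\otimes a_h\otimes\phi$ where $(\sigma^*\phi)(f(\lambda_1,..,\lambda_h))=\phi(f(\lambda_{\sigma(1)},..,\lambda_{\sigma(h)}))$. Contraction: for $\xi$ represented by $a_1\otimes\cdots\otimes a_h\otimes\phi$ and $\tilde\gamma\in\tilde\Gamma^k$, $k\ge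 h$, $(\iota_\xi\tilde\gamma)_{\lambda_{h+1},\dots,\lambda_k}(a_{h+1},\dots,a_k)=\phi^\mu(\tilde\gamma_{\lambda_1,\dots,\lambda_k}(a_1,\dots,a_k))$, where $\phi^\mu:\mathbb F[\lambda_1,\dots,\lambda_h]\otimes M\to M$, $f\otimes m\mapsto\phi(f)\,m$, applied coefficientwise in $\lambda_{h+1},\dots,\lambda_k$; $\iota_\xi=0$ on $\tilde\Gamma^k$ for $k<h$; extended linearly in $\xi$ (this is well defined and lands in $\tilde\Gamma^{k-h}$). *)

(* Defs.v *)
From HB Require Import structures.
From mathcomp Require Import all_boot all_order all_algebra all_fingroup.
From mathcomp Require Import finmap.
From mathcomp.multinomials Require Import monalg mpoly.
Set Implicit Arguments. Unset Strict Implicit. Unset Printing Implicit Defensive.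
Import Order.TTheory GRing.Theory Num.Theory.
Local Open Scope ring_scope.

(* For a F-module V, the space F[lambda]\otimes V is represented
   by {malg V[nat]} (finitely supported coefficient families: "cf n p" is the
   coefficient of lambda^n), and F[lambda_1..lambda_k]\otimes V by
   {malg V['X_{1..k}]} ("cf alpha p" is the coefficient of lambda^alpha). *)

Definition cf (K : choiceType) (G : zmodType) (k : K) (p : {malg G[K]}) : G :=
  monalg.mcoeff k p.

Definition supp (K : choiceType) (G : zmodType) (p : {malg G[K]}) : {fset K} :=
  monalg.msupp p.

(* coefficient of lambda^n in lambda * p *)
Definition shiftc (V : zmodType) (p : {malg V[nat]}) (n : nat) : V :=
  if n is n'.+1 then (cf n' (p)) else 0.

(* A is an F[d]-module (d linear), br a b = a_lambda b. *)
Definition is_lie_conformal (F : fieldType) (A : lmodType F)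
    (d : {linear A -> A}) (br : A -> A -> {malg A[nat]}) : Prop :=
  (forall (c : F) a a' b n,
      (cf n (br (c *: a + a') b)) = c *: (cf n (br a b)) + (cf n (br a' b))) /\
  (forall (c : F) a b b' n,
      (cf n (br a (c *: b + b'))) = c *: (cf n (br a b)) + (cf n (br a b'))) /\
  (* sesquilinearity: (da)_l b = -l a_l b,  a_l (db) = (l + d)(a_l b) *)
  (forall a b n, (cf n (br (d a) b)) = - shiftc (br a b) n) /\
  (forall a b n, (cf n (br a (d b))) = shiftc (br a b) n + d ((cf n (br a b)))) /\
  (* skew-symmetry: b_l a = - a_{-l-d} b *)
  (forall a b n, (cf n (br b a)) =
     - \sum_(p <- supp (br a b) | (n <= p)%N)
         (((-1) ^+ p * ('C(p, n))%:R) *: iter (p - n) d ((cf p (br a b))))) /\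
  (* Jacobi: a_l (b_m c) = (a_l b)_{l+m} c + b_m (a_l c),
     coefficient of l^r m^q *)
  (forall a b c r q,
     cf r (br a (cf q (br b c))) =
       \sum_(i < r.+1)
          (('C(q + r - i, r - i))%:R *: cf (q + r - i) (br (cf (i : nat) (br a b)) c))
       + cf q (br b (cf r (br a c)))).

(* dM = d^M, act a m = a_lambda m *)
Definition is_lca_module (F : fieldType) (A : lmodType F)
    (d : {linear A -> A}) (br : A -> A -> {malg A[nat]})
    (M : lmodType F) (dM : {linear M -> M}) (act : A -> M -> {malg M[nat]})
    : Prop :=
  (forall (c : F) a a' m n,
      (cf n (act (c *: a + a') m)) = c *: (cf n (act a m)) + (cf n (act a' m))) /\
  (forall (c : F) a m m' n,
      (cf n (act a (c *: m + m'))) = c *: (cf n (act a m)) + (cf n (act a m'))) /\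
  (forall a m n, (cf n (act (d a) m)) = - shiftc (act a m) n) /\
  (forall a m n, (cf n (act a (dM m))) = shiftc (act a m) n + dM ((cf n (act a m)))) /\
  (* [a_l, b_m] m = (a_l b)_{l+m} m, coefficient of l^r m^q *)
  (forall a b m r q,
     cf r (act a (cf q (act b m))) - cf q (act b (cf r (act a m))) =
       \sum_(i < r.+1)
          (('C(q + r - i, r - i))%:R *: cf (q + r - i) (act (cf (i : nat) (br a b)) m))).

Definition is_comm_assoc_product (F : fieldType) (M : lmodType F)
    (mul : M -> M -> M) : Prop :=
  (forall (c : F) x y z, mul (c *: x + y) z = c *: mul x z + mul y z) /\
  (forall x y, mul x y = mul y x) /\
  (forall x y z, mul x (mul y z) = mul (mul x y) z).

Definition product_derivations (F : fieldType) (A : lmodType F)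
    (M : lmodType F) (dM : {linear M -> M}) (act : A -> M -> {malg M[nat]})
    (mul : M -> M -> M) : Prop :=
  (forall x y, dM (mul x y) = mul (dM x) y + mul x (dM y)) /\
  (forall a x y n, (cf n (act a (mul x y))) = mul ((cf n (act a x))) y + mul x ((cf n (act a y)))).

Definition cochain (A M : zmodType) (k : nat) : Type :=
  ('I_k -> A) -> {malg M['X_{1..k}]}.

Definition upd (A : Type) k (x : 'I_k -> A) (i : 'I_k) (u : A) : 'I_k -> A :=
  fun j => if j == i then u else x j.

Definition is_cochain (F : fieldType) (A : lmodType F) (d : {linear A -> A})
    (M : lmodType F) (k : nat) (g : cochain A M k) : Prop :=
  (forall (x : 'I_k -> A) i (c : F) u v alpha,
     (cf alpha (g (upd x i (c *: u + v)))) =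
       c *: (cf alpha (g (upd x i u))) + (cf alpha (g (upd x i v)))) /\
  (* g(.., d a_i, ..) = - lambda_i g(..) *)
  (forall (x : 'I_k -> A) i (alpha : 'X_{1..k}),
     (cf alpha (g (upd x i (d (x i))))) =
       - (if (0 < alpha i)%N then (cf (alpha - U_(i))%MM (g x)) else 0)) /\
  (* skew-symmetry under simultaneous permutation of the a_i and lambda_i:
     g_{l_s(1),..,l_s(k)}(a_s(1),..,a_s(k)) = sign(s) g_{l_1..l_k}(a_1..a_k);
     the coefficient of lambda^alpha on the left is the coefficient of
     lambda^(alpha o s) in g(a o s). *)
  (forall (s : 'S_k) (x : 'I_k -> A) (alpha : 'X_{1..k}),
     (cf ([multinom alpha (s i) | i < k]) (g (x \o s))) =
       ((-1) ^+ odd_perm s) *: (cf alpha (g x))).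

(* (b_1..b_h, y_1..y_(k-h)) as a k-tuple (meaningful when h <= k) *)
Definition join (A : zmodType) h m k (b : 'I_h -> A) (y : 'I_m -> A)
    (i : 'I_k) : A :=
  match (insub (val i) : option 'I_h) with
  | Some i' => b i'
  | None => match (insub (val i - h)%N : option 'I_m) with
            | Some j => y j
            | None => 0 end
  end.

Definition mfirst k h (alpha : 'X_{1..k}) : 'X_{1..h} :=
  [multinom nth 0%N (tval (multinom_val alpha)) i | i < h].
Definition mlast k h (alpha : 'X_{1..k}) : 'X_{1..k - h} :=
  [multinom nth 0%N (tval (multinom_val alpha)) (h + i) | i < k - h].

(* contraction by a pure tensor  b_1 (x) .. (x) b_h (x) phi,
   phi in Hom_F(F[lambda_1..lambda_h], M); zero when k < h *)
Definition contract_pure (F : fieldType) (A : lmodType F) (M : lmodType F)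
    (mul : M -> M -> M) h (b : 'I_h -> A) (phi : {linear {mpoly F[h]} -> M})
    k (g : cochain A M k) : cochain A M (k - h) :=
  fun y =>
    if (h <= k)%N then
      \sum_(alpha <- supp (g (join b y)))
         << mul (phi 'X_[mfirst h alpha]) ((cf alpha (g (join b y))))
            *g mlast h alpha >>
    else 0.

(* An element of Gamma~_h(A,M), given by a representative: a finite sum of
   pure tensors b_1 (x) .. (x) b_h (x) phi. *)
Definition chain (F : fieldType) (A : lmodType F) (M : lmodType F) (h : nat)
  := seq (('I_h -> A) * {linear {mpoly F[h]} -> M}).

Definition contract (F : fieldType) (A : lmodType F) (M : lmodType F)
    (mul : M -> M -> M) h (xi : chain A M h) k (g : cochain A M k)
    : cochain A M (k - h) :=
  fun y => \sum_(t <- xi) contract_pure mul t.1 t.2 g y.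

Definition castC (A M : zmodType) m n (e : m = n) (g : cochain A M m)
  : cochain A M n := ecast n (cochain A M n) e g.

(* Main.v *)
From Pilot Require Import Defs.
From HB Require Import structures.
From mathcomp Require Import all_boot all_order all_algebra all_fingroup.
From mathcomp Require Import finmap.
From mathcomp.multinomials Require Import monalg mpoly.
Import Order.TTheory GRing.Theory Num.Theory.
Local Open Scope ring_scope.
From mathcomp Require Import zify.
From Stdlib Require Import FunctionalExtensionality.
Import Pilot.Defs.
Set Implicit Arguments. Unset Strict Implicit. Unset Printing Implicit Defensive.
Import Order.TTheory GRing.Theory Num.Theory.
Local Open Scope ring_scope.



Definition ev n (a : 'X_{1..n}) (p : nat) : nat := nth 0%N (tval (multinom_val a)) p.

Lemma evE n (a : 'X_{1..n}) (i : 'I_n) : ev a i = a i.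
Proof. by rewrite /ev (mnm_nth 0%N). Qed.

Lemma ev_out n (a : 'X_{1..n}) p : (n <= p)%N -> ev a p = 0%N.
Proof. by move=> H; rewrite /ev nth_default // size_tuple. Qed.

Lemma mnm_ext n (a b : 'X_{1..n}) : (forall i : 'I_n, ev a i = ev b i) -> a = b.
Proof. by move=> H; apply/mnmP => i; rewrite -!evE H. Qed.

Lemma ev_mlast k h (a : 'X_{1..k}) (p : nat) : (h <= k)%N -> ev (mlast h a) p = ev a (h + p)%N.
Proof.
move=> hk; case: (ltnP p (k - h)) => Hp.
  by rewrite -[p]/(val (Ordinal Hp)) evE /mlast mnmE.
by rewrite !ev_out //; lia.
Qed.

Lemma ev_mfirst k h (a : 'X_{1..k}) (p : nat) : ev (mfirst h a) p = if (p < h)%N then ev a p else 0%N.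
Proof.
case: (ltnP p h) => Hp.
  by rewrite -[p]/(val (Ordinal Hp)) evE /mfirst mnmE.
by rewrite !ev_out.
Qed.

Lemma eq_ev_eq n m (X g : 'X_{1..n}) (Y g' : 'X_{1..m}) :
  (forall p, ev X p = ev Y p) -> (forall p, ev g p = ev g' p) -> (X == g) = (Y == g').
Proof.
move=> HXY Hg; apply/eqP/eqP => H.
  by apply: mnm_ext => i; rewrite -HXY -Hg H.
by apply: mnm_ext => i; rewrite HXY Hg H.
Qed.

Lemma ev_sigma k (a : 'X_{1..k}) (s : 'I_k -> 'I_k) (sv : nat -> nat)
  (Hs : forall i, val (s i) = sv (val i)) p (Hp : (p < k)%N) :
  ev [multinom a (s i) | i < k] p = ev a (sv p).
Proof. by rewrite -[p]/(val (Ordinal Hp)) evE mnmE -evE Hs. Qed.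

Lemma castC_cf (A M : zmodType) m n (e : m = n) (G : cochain A M m)
  (y : 'I_n -> A) (g : 'X_{1..n}) (y' : 'I_m -> A) (g' : 'X_{1..m}) :
  (forall i, y' i = y (cast_ord e i)) -> (forall p, ev g' p = ev g p) ->
  cf g (castC e G y) = cf g' (G y').
Proof.
case: n / e y g => y g Hy Hg.
have -> : y' = y by apply: functional_extensionality => i; rewrite Hy cast_ord_id.
have -> : g' = g by apply: mnm_ext => i; rewrite Hg.
by [].
Qed.



Section PsiSec.
Variables (K : choiceType) (M : zmodType).

Definition Psi (F : K -> M -> M) (Q : {malg M[K]}) : M :=
  \sum_(b <- supp Q) F b (cf b Q).

Lemma PsiE_sup F Q (S : seq K) : (forall b, F b 0 = 0) -> uniq S ->
  {subset supp Q <= S} -> Psi F Q = \sum_(b <- S) F b (cf b Q).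
Proof.
move=> F0 uS sub; rewrite (bigID (fun b => b \in supp Q)) /=.
rewrite [X in _ = _ + X]big1 ?addr0; last first.
  by move=> b /negbTE Hb; rewrite /cf monalg.mcoeff_outdom ?Hb.
rewrite -big_filter /Psi; apply: perm_big.
apply: uniq_perm; first exact: fset_uniq.
  exact: filter_uniq.
by move=> b; rewrite mem_filter; case Hb: (b \in supp Q); rewrite //= sub.
Qed.

Lemma PsiD F (F0 : forall b, F b 0 = 0) (FD : forall b x y, F b (x + y) = F b x + F b y) Q1 Q2 :
  Psi F (Q1 + Q2) = Psi F Q1 + Psi F Q2.
Proof.
have sub1 : {subset supp Q1 <= (supp Q1 `|` supp Q2)%fset} by move=> b Hb; rewrite in_fsetU Hb.
have sub2 : {subset supp Q2 <= (supp Q1 `|` supp Q2)%fset} by move=> b Hb; rewrite in_fsetU Hb orbT.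
have sub3 : {subset supp (Q1 + Q2) <= (supp Q1 `|` supp Q2)%fset} by apply/fsubsetP/monalg.msuppD_le.
rewrite (PsiE_sup F0 (fset_uniq _) sub1) (PsiE_sup F0 (fset_uniq _) sub2).
rewrite (PsiE_sup F0 (fset_uniq _) sub3) -big_split /=.
by apply: eq_bigr => b _; rewrite /cf monalg.mcoeffD FD.
Qed.

Lemma Psi0 F : Psi F 0 = 0.
Proof. by rewrite /Psi /supp monalg.msupp0 big_nil. Qed.

Lemma Psi_sum F (F0 : forall b, F b 0 = 0) (FD : forall b x y, F b (x + y) = F b x + F b y)
  (I : Type) (r : seq I) (Q : I -> {malg M[K]}) :
  Psi F (\sum_(i <- r) Q i) = \sum_(i <- r) Psi F (Q i).
Proof.
elim: r => [|i r IH]; first by rewrite !big_nil Psi0.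
by rewrite !big_cons PsiD // IH.
Qed.

Lemma PsiU F (F0 : forall b, F b 0 = 0) m a : Psi F << m *g a >> = F a m.
Proof.
have sub : {subset supp << m *g a >> <= [:: a]}.
  by move=> b /(fsubsetP monalg.msuppU_le); rewrite in_fset1 inE.
by rewrite (PsiE_sup F0 _ sub) // big_seq1 /cf monalg.mcoeffUU.
Qed.

Lemma cf_sum (I : Type) (r : seq I) (Q : I -> {malg M[K]}) g :
  cf g (\sum_(i <- r) Q i) = \sum_(i <- r) cf g (Q i).
Proof.
elim: r => [|i r IH]; first by rewrite !big_nil /cf monalg.mcoeff0.
by rewrite !big_cons /cf monalg.mcoeffD -IH.
Qed.

End PsiSec.

Lemma Psi_mono (K K' : choiceType) (M : zmodType) (F : K' -> M -> M)
  (F0 : forall b, F b 0 = 0) (FD : forall b x y, F b (x + y) = F b x + F b y)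
  (T : K -> M -> M) (L : K -> K') (G : {malg M[K]}) :
  Psi F (\sum_(a <- supp G) << T a (cf a G) *g L a >>) = Psi (fun a m => F (L a) (T a m)) G.
Proof.
rewrite Psi_sum //; apply: eq_bigr => a _; rewrite PsiU //.
Qed.

Lemma cf_Psi (K K' : choiceType) (M : zmodType) (T : K -> M -> M) (L : K -> K') (G : {malg M[K]}) g :
  cf g (\sum_(a <- supp G) << T a (cf a G) *g L a >>) = Psi (fun a m => T a m *+ (L a == g)) G.
Proof. by rewrite cf_sum; apply: eq_bigr => a _; rewrite /cf monalg.mcoeffU. Qed.

Lemma Psi_ext (K : choiceType) (M : zmodType) (F F' : K -> M -> M) Q :
  (forall b m, F b m = F' b m) -> Psi F Q = Psi F' Q.
Proof. by move=> H; apply: eq_bigr => b _; rewrite H. Qed.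

Fixpoint swp (j h N : nat) {struct h} : 'S_N :=
  match h, N return 'S_N with
  | h'.+1, N'.+1 => lift_perm ord0 (inord j) (swp j h' N')
  | _, _ => 1%g
  end.

Definition sv (j h p : nat) : nat :=
  if (p < h)%N then (p + j)%N else if (p < h + j)%N then (p - h)%N else p.

Lemma odd_swp j h N : (h + j <= N)%N -> odd_perm (swp j h N) = odd (h * j).
Proof.
elim: h N => [|h IH] [|N] /=; rewrite ?odd_perm1 //.
move=> hN; rewrite odd_lift_perm /= inordK; last by lia.
rewrite IH; last by lia.
by rewrite mulSn oddD addbC.
Qed.

Lemma swpE j h N (i : 'I_N) : (h + j <= N)%N -> val (swp j h N i) = sv j h (val i).
Proof.
elim: h N i => [|h IH] N i hN.
  by rewrite /= perm1 /sv ltn0 subn0; case: ifP.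
case: N i hN => [|N] i hN; first by case: i.
case: (unliftP ord0 i) => [k -> | ->].
  rewrite /= lift_perm_lift /= /bump IH; last by lia.
  rewrite inordK; last by lia.
  rewrite /sv /=; case: ifP => H1; case: ifP => H2; try case: ifP => H3; try case: ifP => H4;
  rewrite ?H1 ?H2 ?H3 ?H4 /=; lia.
rewrite /= lift_perm_id /= inordK; last by lia.
by rewrite /sv.
Qed.



Section MulSec.
Variables (F : fieldType) (M : lmodType F) (mul : M -> M -> M).
Hypothesis hmul : is_comm_assoc_product mul.

Lemma cmulDl x y z : mul (x + y) z = mul x z + mul y z.
Proof. by have := hmul.1 1 x y z; rewrite !scale1r. Qed.
Lemma cmul0l z : mul 0 z = 0.
Proof.
have H : mul 0 z + mul 0 z = mul 0 z + 0 by rewrite addr0 -cmulDl addr0.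
by move/addrI: H.
Qed.
Lemma cmulZl c x z : mul (c *: x) z = c *: mul x z.
Proof. by have := hmul.1 c x 0 z; rewrite !addr0 cmul0l addr0. Qed.
Lemma cmulDr x y z : mul z (x + y) = mul z x + mul z y.
Proof. by rewrite !(hmul.2.1 z) cmulDl. Qed.
Lemma cmul0r z : mul z 0 = 0.
Proof. by rewrite hmul.2.1 cmul0l. Qed.
Lemma cmulZr c x z : mul z (c *: x) = c *: mul z x.
Proof. by rewrite !(hmul.2.1 z) cmulZl. Qed.
Lemma cmulCA x y z : mul x (mul y z) = mul y (mul x z).
Proof. by rewrite !hmul.2.2 (hmul.2.1 x). Qed.
End MulSec.

Section Agree.
Variable (A : zmodType).
Definition agree n (x : 'I_n -> A) (f : nat -> A) := forall i : 'I_n, x i = f (val i).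
Definition ext n (x : 'I_n -> A) (p : nat) : A := if insub p is Some o then x o else 0.
Lemma agree_ext n (x : 'I_n -> A) : agree x (ext x).
Proof. by move=> i; rewrite /ext valK. Qed.

Lemma join_agree h m n (b : 'I_h -> A) (y : 'I_m -> A) fb fy :
  agree b fb -> agree y fy -> (n <= h + m)%N ->
  agree (@join A h m n b y) (fun p => if (p < h)%N then fb p else fy (p - h)%N).
Proof.
move=> Hb Hy Hn i; rewrite /join.
case: insubP => [o Ho Hov | Hno].
  by rewrite Hb Hov Ho.
case: insubP => [o Ho Hov | Hn2].
  by rewrite Hy Hov (negbTE Hno).
exfalso; move: Hno Hn2 (valP i); rewrite -!leqNgt; lia.
Qed.
End Agree.

Lemma sv_agree (A : Type) j h (fb fc fy : nat -> A) p :
  (if (sv j h p < j)%N then fc (sv j h p) else if (sv j h p - j < h)%N then fb (sv j h p - j)%N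
   else fy (sv j h p - j - h)%N) =
  (if (p < h)%N then fb p else if (p - h < j)%N then fc (p - h)%N else fy (p - h - j)%N).
Proof.
rewrite /sv; case: (ltnP p h) => H1.
  have -> : (p + j < j)%N = false by lia.
  by rewrite addnK H1.
case: (ltnP p (h + j)) => H2.
  have -> : (p - h < j)%N = true by lia.
  by [].
have -> : (p < j)%N = false by lia.
have -> : (p - j < h)%N = false by lia.
have -> : (p - h < j)%N = false by lia.
by rewrite subnAC.
Qed.



Section Contr.
Variables (F : fieldType) (A M : lmodType F) (mul : M -> M -> M).
Hypothesis hmul : is_comm_assoc_product mul.

Lemma cf_cp h (b : 'I_h -> A) (phi : {linear {mpoly F[h]} -> M}) k (g : cochain A M k) y gam :
  (h <= k)%N -> cf gam (contract_pure mul b phi g y) =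
  Psi (fun a m => mul (phi 'X_[mfirst h a]) m *+ (mlast h a == gam)) (g (join b y)).
Proof.
move=> H; rewrite /contract_pure H.
exact: (cf_Psi (fun a m => mul (phi 'X_[mfirst h a]) m) (fun a => mlast h a)).
Qed.

Lemma Psi_cp h (b : 'I_h -> A) (phi : {linear {mpoly F[h]} -> M}) k (g : cochain A M k) y
  (Fo : 'X_{1..k - h} -> M -> M)
  (F0 : forall b, Fo b 0 = 0) (FD : forall b x y, Fo b (x + y) = Fo b x + Fo b y) :
  (h <= k)%N -> Psi Fo (contract_pure mul b phi g y) =
  Psi (fun a m => Fo (mlast h a) (mul (phi 'X_[mfirst h a]) m)) (g (join b y)).
Proof.
move=> H; rewrite /contract_pure H.
exact: (Psi_mono F0 FD (fun a m => mul (phi 'X_[mfirst h a]) m) (fun a => mlast h a)).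
Qed.

Lemma cp0 h (b : 'I_h -> A) (phi : {linear {mpoly F[h]} -> M}) k (G : cochain A M k) y :
  (forall z, G z = 0) -> contract_pure mul b phi G y = 0.
Proof.
move=> G0; rewrite /contract_pure; case: ifP => // _.
by rewrite G0 /supp monalg.msupp0 big_nil.
Qed.

Lemma contract_big h (xi : chain A M h) k (g : cochain A M k) y :
  (k < h)%N -> contract mul xi g y = 0.
Proof.
move=> H; rewrite /contract big1 // => t _.
by rewrite /contract_pure ifF //; apply/negbTE; rewrite -ltnNge.
Qed.

Lemma contract2_0 h j (xi : chain A M h) (zeta : chain A M j) k (g : cochain A M k) y :
  ~~ (h + j <= k)%N -> contract mul xi (contract mul zeta g) y = 0.
Proof.
move=> H; rewrite /contract big1 // => t _.
rewrite /contract_pure; case: ifP => // H2.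
have Z : forall z, contract mul zeta g z = 0 by move=> z; apply: contract_big; lia.
by rewrite /contract in Z; rewrite Z /supp monalg.msupp0 big_nil.
Qed.

Lemma Fmul_0 (p : M) (bo : bool) : mul p 0 *+ bo = 0.
Proof. by rewrite (cmul0r hmul) mul0rn. Qed.
Lemma Fmul_D (p : M) (bo : bool) x y : mul p (x + y) *+ bo = mul p x *+ bo + mul p y *+ bo.
Proof. by rewrite (cmulDr hmul) mulrnDl. Qed.

Lemma pair_lemma h j k (Hk : (h + j <= k)%N) (g : cochain A M k)
  (skew : forall (s : 'S_k) (x : 'I_k -> A) (alpha : 'X_{1..k}),
     (cf ([multinom alpha (s i) | i < k]) (g (x \o s))) =
       ((-1) ^+ odd_perm s) *: (cf alpha (g x)))
  (b : 'I_h -> A) (phi : {linear {mpoly F[h]} -> M})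
  (c : 'I_j -> A) (psi : {linear {mpoly F[j]} -> M})
  (x1 x2 : 'I_k -> A) (Hx : forall i, x2 i = x1 (swp j h k i))
  (gam : 'X_{1..k - h - j}) (gam' : 'X_{1..k - j - h}) (Hgam : forall p, ev gam' p = ev gam p) :
  Psi (fun a m => mul (phi 'X_[mfirst h (mlast j a)]) (mul (psi 'X_[mfirst j a]) m)
                    *+ (mlast h (mlast j a) == gam')) (g x1) =
  (-1) ^+ (h * j) *: Psi (fun a m => mul (psi 'X_[mfirst j (mlast h a)]) (mul (phi 'X_[mfirst h a]) m)
                    *+ (mlast j (mlast h a) == gam)) (g x2).
Proof.
set s := swp j h k.
set sig := fun a : 'X_{1..k} => [multinom a (s i) | i < k].
have Hs : forall i, val (s i) = sv j h (val i) by move=> i; apply: swpE.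
have Hg2 : g x2 = g (x1 \o s) by congr g; apply: functional_extensionality => i; rewrite Hx.
have Hsign : (-1) ^+ odd_perm s = (-1) ^+ (h * j) :> F by rewrite odd_swp // signr_odd.
have Hc : forall a, cf (sig a) (g x2) = (-1) ^+ (h * j) *: cf a (g x1).
  by move=> a; rewrite Hg2 skew Hsign.
have sig_inj : injective sig.
  move=> a a' E; apply/mnmP => i.
  have := congr1 (fun m : 'X_{1..k} => m ((s^-1)%g i)) E.
  by rewrite /sig !mnmE permKV.
have sig_surj : forall be : 'X_{1..k}, sig [multinom be ((s^-1)%g i) | i < k] = be.
  by move=> be; apply/mnmP => i; rewrite /sig !mnmE permK.
rewrite [X in _ = _ *: X](@PsiE_sup _ _ _ _ [seq sig a | a <- supp (g x1)]); first last.
- move=> be Hbe.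
  have Ha0 : [multinom be ((s^-1)%g i) | i < k] \in supp (g x1).
    move: Hbe; rewrite /supp -!monalg.mcoeff_neq0; apply: contra => /eqP H0.
    have := Hc [multinom be ((s^-1)%g i) | i < k]; rewrite sig_surj /cf.
    by move=> ->; rewrite H0 scaler0.
  by have := map_f sig Ha0; rewrite sig_surj.
- by rewrite map_inj_uniq //; apply: fset_uniq.
- by move=> be; rewrite !(cmul0r hmul) mul0rn.
rewrite big_map scaler_sumr /Psi; apply: eq_bigr => a _.
rewrite Hc (cmulZr hmul) (cmulZr hmul) -scalerMnr signrZK.
have ev_sig : forall p, (p < k)%N -> ev (sig a) p = ev a (sv j h p).
  by move=> p Hp; apply: ev_sigma.
have E1 : mfirst h (sig a) = mfirst h (mlast j a).
  apply: mnm_ext => i; rewrite !ev_mfirst ltn_ord ev_sig; last by have := ltn_ord i; lia.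
  rewrite ev_mlast; last by lia.
  by rewrite /sv ltn_ord addnC.
have E2 : mfirst j (mlast h (sig a)) = mfirst j a.
  apply: mnm_ext => i; rewrite !ev_mfirst ltn_ord ev_mlast; last by lia.
  rewrite ev_sig; last by have := ltn_ord i; lia.
  rewrite /sv; have -> : (h + i < h)%N = false by lia.
  have -> : (h + i < h + j)%N = true by have := ltn_ord i; lia.
  by rewrite addKn.
have E3 : (mlast j (mlast h (sig a)) == gam) = (mlast h (mlast j a) == gam').
  apply: eq_ev_eq => [p|p]; last by rewrite Hgam.
  rewrite ev_mlast; last by lia.
  rewrite ev_mlast; last by lia.
  rewrite ev_mlast; last by lia.
  rewrite ev_mlast; last by lia.
  case: (ltnP (h + (j + p)) k) => Hp.
    rewrite ev_sig // /sv.
    have -> : (h + (j + p) < h)%N = false by lia.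
    have -> : (h + (j + p) < h + j)%N = false by lia.
    by rewrite addnCA.
  by rewrite !ev_out //; lia.
by rewrite E1 E2 E3 (cmulCA hmul).
Qed.

End Contr.



Theorem proposition3p4
  (F : fieldType) (charF0 : [pchar F] =i pred0)
  (A : lmodType F) (d : {linear A -> A}) (br : A -> A -> {malg A[nat]})
  (hA : is_lie_conformal d br)
  (M : lmodType F) (dM : {linear M -> M}) (act : A -> M -> {malg M[nat]})
  (hM : is_lca_module d br dM act)
  (mul : M -> M -> M) (hmul : is_comm_assoc_product mul)
  (hder : product_derivations dM act mul)
  (h j : nat) (xi : chain A M h) (zeta : chain A M j)
  (k : nat) (g : cochain A M k) (hg : is_cochain d g)
  (y : 'I_(k - h - j) -> A) (alpha : 'X_{1..k - h - j}) :
  (cf alpha (castC (subnAC k j h) (contract mul xi (contract mul zeta g)) y)) =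
  ((-1) ^+ (h * j)) *: (cf alpha (contract mul zeta (contract mul xi g) y)).
Proof.
set e := subnAC k j h.
set y' := fun i => y (cast_ord e i).
set gam' := [multinom nth 0%N (tval (multinom_val alpha)) i | i < k - j - h].
have Hgam : forall p, ev gam' p = ev alpha p.
  move=> p; case: (ltnP p (k - j - h)) => Hp.
    by rewrite -[p]/(val (Ordinal Hp)) evE mnmE.
  by rewrite !ev_out //; lia.
rewrite (@castC_cf _ _ _ _ e _ y alpha y' gam') //.
case: (leqP (h + j) k) => Hk; last first.
  rewrite contract2_0; last by rewrite -ltnNge.
  rewrite contract2_0; last by rewrite -ltnNge; lia.
  by rewrite /cf !monalg.mcoeff0 scaler0.
have skew := hg.2.2.
have FD : forall (p : M) (bo : bool) x z, mul p (x + z) *+ bo = mul p x *+ bo + mul p z *+ bo.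
  by move=> ? ? ? ?; rewrite (cmulDr hmul) mulrnDl.
have F0 : forall (p : M) (bo : bool), mul p 0 *+ bo = 0.
  by move=> ? ?; rewrite (cmul0r hmul) mul0rn.
rewrite /contract cf_sum cf_sum scaler_sumr.
have EL : forall t : prod ('I_h -> A) {linear {mpoly F[h]} -> M},
  cf gam' (contract_pure mul t.1 t.2
     (fun y0 => \sum_(u <- zeta) contract_pure mul u.1 u.2 g y0) y') =
  \sum_(u <- zeta)
   Psi (fun a m => mul (t.2 'X_[mfirst h (mlast j a)]) (mul (u.2 'X_[mfirst j a]) m)
                    *+ (mlast h (mlast j a) == gam')) (g (join u.1 (@join _ h _ (k - j) t.1 y'))).
  move=> t; rewrite cf_cp; last by lia.
  rewrite Psi_sum //; apply: eq_bigr => u _.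
  rewrite Psi_cp //; lia.
have ER : forall u : prod ('I_j -> A) {linear {mpoly F[j]} -> M},
  (-1) ^+ (h * j) *: cf alpha (contract_pure mul u.1 u.2
     (fun y0 => \sum_(t <- xi) contract_pure mul t.1 t.2 g y0) y) =
  \sum_(t <- xi) (-1) ^+ (h * j) *:
   Psi (fun a m => mul (u.2 'X_[mfirst j (mlast h a)]) (mul (t.2 'X_[mfirst h a]) m)
                    *+ (mlast j (mlast h a) == alpha)) (g (join t.1 (@join _ j _ (k - h) u.1 y))).
  move=> u; rewrite cf_cp; last by lia.
  rewrite Psi_sum // scaler_sumr; apply: eq_bigr => t _.
  rewrite Psi_cp //; lia.
rewrite (eq_bigr _ (fun t _ => EL t)) (eq_bigr _ (fun u _ => ER u)).
rewrite [RHS]exchange_big /=; apply: eq_bigr => t _; apply: eq_bigr => u _.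
apply: (pair_lemma hmul Hk skew t.1 t.2 u.1 u.2 (x1 := join u.1 (@join _ h _ (k - j) t.1 y')) (x2 := join t.1 (@join _ j _ (k - h) u.1 y)) _ Hgam).
move=> i.
have Ay' : agree y' (ext y) by move=> i0; rewrite /y' /= (agree_ext y).
have A1 := @join_agree _ h _ (k - j) t.1 y' _ _ (agree_ext t.1) Ay' ltac:(lia).
have A1' := @join_agree _ j _ k u.1 _ _ _ (agree_ext u.1) A1 ltac:(lia).
have A2 := @join_agree _ j _ (k - h) u.1 y _ _ (agree_ext u.1) (agree_ext y) ltac:(lia).
have A2' := @join_agree _ h _ k t.1 _ _ _ (agree_ext t.1) A2 ltac:(lia).
rewrite A2' A1' swpE //=.
exact: (esym (sv_agree j h (ext t.1) (ext u.1) (ext y) (val i))).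
Qed.
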